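(* Let $\nu>0$, $q\ge0$, $k\ge1$, let $\pi_0,\ldots,\pi_k>0$ with $\sum_j\pi_j=1$, let $\lambda_0,\ldots,\lambda_k\ge1$, and let $c_0,\ldots,c_k\in\mathbb R$ satisfy \[ \sum_{j=0}^k c_j=1,\qquad \sum_{j=0}^k c_j\lambda_j=0. \] Then \[ K_{q,k}:=\nu\left[\sum_{j=0}^k\frac{c_j^2\lambda_j^q}{\pi_j}-1\right]>0. \]
   Context: In the application, $\lambda_j$ are the noise scale factors of a Richardson zero-noise-extrapolation rule of order $k$ (so the coefficients also satisfy $\sum_j c_j\lambda_j^m=0$ for $m=1,\ldots,k$), $\pi_j$ are the fractions of the total shot budget allocated to scale $\lambda_j$, and $\nu\epsilon^q$ is the leading term of the single-shot variance $v(\epsilon)$; $K_{q,k}\epsilon^q/B$ is then the leading excess variance of the Richardson estimator over the unmitigated estimator with budget $B$. *)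

(* Defs.v *)
From mathcomp Require Import all_boot all_order all_algebra.
From mathcomp Require Import all_classical all_reals all_analysis.

(* Main.v *)
Require Import Defs.
From mathcomp Require Import all_boot all_order all_algebra.
From mathcomp Require Import all_classical all_reals all_analysis.
From mathcomp Require Import ring lra.
Import Order.TTheory GRing.Theory Num.Theory.
Local Open Scope ring_scope.

Theorem proposition2 (R : realType) (nu q : R) (k : nat)
  (pi lam c : 'I_k.+1 -> R) :
  0 < nu -> 0 <= q -> (1 <= k)%N ->
  (forall j, 0 < pi j) -> \sum_(j < k.+1) pi j = 1 ->
  (forall j, 1 <= lam j) ->
  \sum_(j < k.+1) c j = 1 ->
  \sum_(j < k.+1) c j * lam j = 0 ->
  0 < nu * (\sum_(j < k.+1) (c j ^+ 2 * lam j `^ q / pi j) - 1).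
Proof.
move=> nu0 q0 _ pi0 spi lam1 sc scl.
apply: mulr_gt0 => //; rewrite subr_gt0.
have [j0 cj0] : exists j, c j <= 0.
  have [//|H0] := pselect (exists j, c j <= 0).
  have H : forall i, 0 < c i.
    by move=> i; rewrite ltNge; apply/negP => ?; apply: H0; exists i.
  have : 0 < \sum_(j < k.+1) c j * lam j.
    rewrite (bigD1 ord0) //=; apply: ltr_pwDl.
      apply: mulr_gt0; first exact: H.
      exact: lt_le_trans (lam1 ord0).
    apply: sumr_ge0 => i _; apply: mulr_ge0.
      exact/ltW/H.
    exact: le_trans (lam1 i).
  by rewrite scl ltxx.
have key : forall j, (c j - pi j) ^+ 2 / pi j + 2 * c j - pi j
                     <= c j ^+ 2 * lam j `^ q / pi j.
  move=> j; have pj := pi0 j.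
  have -> : (c j - pi j) ^+ 2 / pi j + 2 * c j - pi j = c j ^+ 2 / pi j.
    by field; rewrite gt_eqF.
  rewrite ler_pM2r ?invr_gt0 // ler_peMr ?sqr_ge0 //.
  by rewrite -(powRr0 (lam j)); apply: ler_powR.
apply: lt_le_trans (ler_sum _ (fun j _ => key j)).
rewrite !big_split /=.
rewrite sumrN -mulr_sumr sc spi mulr1.
suff : 0 < \sum_(i < k.+1) (c i - pi i) ^+ 2 / pi i.
  by move: (\sum_(i < k.+1) _) => S hS; lra.
rewrite (bigD1 j0) //=; apply: ltr_pwDl; last first.
  apply: sumr_ge0 => i _; apply: divr_ge0; [exact: sqr_ge0 | exact: ltW].
apply: divr_gt0 => //.
have hn : c j0 - pi j0 < 0 by rewrite subr_lt0; exact: le_lt_trans cj0 (pi0 j0).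
by rewrite exprn_even_gt0 //= lt_eqF.
Qed.
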